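(* Let $\mathbb{H}$ be a Hilbert space with norm $\|\cdot\|$, $\varepsilon>0$, and $\mathcal{D}=\{\phi_j\}_{j\in\mathbb{N}^*}$ an infinite countable ordered dictionary in $\mathbb{H}$ with truncations $\mathcal{D}_p=\{\phi_1,\dots,\phi_p\}$, and let $\lambda_p=4\varepsilon(\sqrt{\ln p}+1)$ for $p\in\mathbb{N}^*$. Let $1<q<2$, $r>0$, $R>0$ and assume $f\in\mathcal{B}_{q,r}(R)$. Then there exists $C_q>0$ depending only on $q$ such that for all $p\in\mathbb{N}^*$, $$\inf_{h\in\mathcal{L}_1(\mathcal{D}_p)}\big(\|f-h\|^2+\lambda_p\|h\|_{\mathcal{L}_1(\mathcal{D}_p)}\big)\le C_q\max\Big(R^q\lambda_p^{2-q},\ (Rp^{-r})^{\frac{2q}{2-q}}\lambda_p^{\frac{4(1-q)}{2-q}}\Big).$$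
   Context: $\mathcal{L}_1(\mathcal{D}_p)$ is the span of $\phi_1,\dots,\phi_p$ with norm $\|h\|_{\mathcal{L}_1(\mathcal{D}_p)}=\inf\{\sum_{j=1}^p|\theta_j|:h=\sum_{j=1}^p\theta_j\phi_j\}$. Space $\mathcal{L}_{1,r}$: $g\in\mathbb{H}$ belongs to $\mathcal{L}_{1,r}$ if there is $C>0$ such that for all $p\in\mathbb{N}^*$ there exists $g_p\in\mathcal{L}_1(\mathcal{D}_p)$ with $\|g_p\|_{\mathcal{L}_1(\mathcal{D}_p)}\le C$ and $\|g-g_p\|\le Cp^{-r}$; the smallest such $C$ is $\|g\|_{\mathcal{L}_{1,r}}$. Space $\mathcal{B}_{q,r}(R)$: with $\alpha=1/q-1/2$, $g\in\mathcal{B}_{q,r}(R)$ if for all $\delta>0$, $\inf_{h\in\mathcal{L}_{1,r}}(\|g-h\|+\delta\|h\|_{\mathcal{L}_{1,r}})\le R\delta^{2\alpha}$. *)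

(* Defs.v *)
From HB Require Import structures.
From mathcomp Require Import all_boot all_order all_algebra.
From mathcomp Require Import all_classical all_reals all_analysis.
Set Implicit Arguments. Unset Strict Implicit. Unset Printing Implicit Defensive.
Import Order.TTheory GRing.Theory Num.Theory.
Import numFieldNormedType.Exports.
Local Open Scope classical_set_scope.
Local Open Scope ring_scope.

Section Defs.
Variable R : realType.

Definition is_inner_product (V : normedModType R) (ip : V -> V -> R) : Prop :=
  (forall x y, ip x y = ip y x) /\
  (forall (a : R) (x y z : V), ip (a *: x + y) z = a * ip x z + ip y z) /\
  (forall x, `|x| = Num.sqrt (ip x x)).

Variable V : normedModType R.

(* dictionary phi_1, phi_2, ... (phi 0 is unused); D_p = {phi_1,...,phi_p} *)
Definition lin_comb (phi : nat -> V) (p : nat) (theta : nat -> R) : V :=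
  \sum_(1 <= j < p.+1) theta j *: phi j.

Definition l1_coef (p : nat) (theta : nat -> R) : R :=
  \sum_(1 <= j < p.+1) `|theta j|.

Definition inL1 (phi : nat -> V) (p : nat) (h : V) : Prop :=
  exists theta, h = lin_comb phi p theta.

Definition L1norm (phi : nat -> V) (p : nat) (h : V) : R :=
  inf [set s | exists theta, h = lin_comb phi p theta /\ s = l1_coef p theta].

Definition L1r_const (phi : nat -> V) (r : R) (g : V) (C : R) : Prop :=
  0 < C /\ forall p : nat, (0 < p)%N ->
    exists gp, inL1 phi p gp /\ L1norm phi p gp <= C /\
               `|g - gp| <= C * (p%:R `^ (- r)).

Definition inL1r (phi : nat -> V) (r : R) (g : V) : Prop :=
  exists C, L1r_const phi r g C.

Definition L1rnorm (phi : nat -> V) (r : R) (g : V) : R :=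
  inf [set C | L1r_const phi r g C].

Definition inB (phi : nat -> V) (q r Rad : R) (g : V) : Prop :=
  forall delta : R, 0 < delta ->
    inf [set x | exists h, inL1r phi r h /\
                 x = `|g - h| + delta * L1rnorm phi r h]
      <= Rad * delta `^ (2 * (q^-1 - 2^-1)).

Definition lambda (eps : R) (p : nat) : R :=
  4 * eps * (Num.sqrt (ln p%:R) + 1).

Definition lasso_oracle (phi : nat -> V) (p : nat) (lam : R) (f : V) : R :=
  inf [set x | exists h, inL1 phi p h /\
               x = `|f - h| ^+ 2 + lam * L1norm phi p h].

End Defs.

(* Main.v *)
Require Import Defs.
From HB Require Import structures.
From mathcomp Require Import all_boot all_order all_algebra.
From mathcomp Require Import all_classical all_reals all_analysis.
Import Order.TTheory GRing.Theory Num.Theory.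
Import numFieldNormedType.Exports.
Local Open Scope classical_set_scope.
Local Open Scope ring_scope.

From mathcomp Require Import ring lra.

Lemma core (R : realType) (q lam Rad P : R) : 1 < q -> q < 2 -> 0 < lam -> 0 < Rad -> 0 < P ->
  forall D A K, D = (lam/Rad)`^(q/2) -> A = Rad * D`^(2*(q^-1-2^-1)) -> K = A/D ->
  A*A = Rad`^q * lam`^(2-q) /\ lam*K = Rad`^q * lam`^(2-q) /\
  (K*P)*(K*P) <= Num.max (Rad`^q * lam`^(2-q)) ((Rad*P)`^(2*q/(2-q)) * lam`^(4*(1-q)/(2-q))).
Proof.
move=> q1 q2 l0 R0 P0 D A K eD eA eK.
set X := Rad`^q * lam`^(2-q). set Y := (Rad*P)`^(2*q/(2-q)) * lam`^(4*(1-q)/(2-q)).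
have pos : forall x : R, 0 < x -> x \in Num.pos by move=> x; rewrite posrE.
have pl := pos _ l0; have pR := pos _ R0; have pP := pos _ P0.
have pD : D \in Num.pos by rewrite eD; apply: pos; apply: powR_gt0; exact: divr_gt0.
have pDe : D`^(2*(q^-1-2^-1)) \in Num.pos by apply: pos; apply: powR_gt0; rewrite -posrE.
have pA : A \in Num.pos by rewrite eA; apply: pos; apply: mulr_gt0; rewrite -posrE.
have pK : K \in Num.pos by rewrite eK; apply: pos; apply: divr_gt0; rewrite -posrE.
have pX1 : Rad`^q \in Num.pos by apply: pos; exact: powR_gt0.
have pX2 : lam`^(2-q) \in Num.pos by apply: pos; exact: powR_gt0.
have pX : X \in Num.pos by apply: pos; apply: mulr_gt0; rewrite -posrE.
have pRP : Rad * P \in Num.pos by apply: pos; exact: mulr_gt0.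
have pY1 : (Rad*P)`^(2*q/(2-q)) \in Num.pos by apply: pos; apply: powR_gt0; rewrite -posrE.
have pY2 : lam`^(4*(1-q)/(2-q)) \in Num.pos by apply: pos; exact: powR_gt0.
have pY : Y \in Num.pos by apply: pos; apply: mulr_gt0; rewrite -posrE.
have plR : lam / Rad \in Num.pos by apply: pos; exact: divr_gt0.
have lnD : ln D = q/2 * (ln lam - ln Rad) by rewrite eD ln_powR (ln_div pl pR).
have lnA : ln A = ln Rad + 2*(q^-1-2^-1) * (q/2 * (ln lam - ln Rad)).
  by rewrite eA (lnM pR pDe) ln_powR lnD.
have lnK' : ln K = ln A - ln D by rewrite eK (ln_div pA pD).
have lnX : ln X = q * ln Rad + (2-q) * ln lam by rewrite /X (lnM pX1 pX2) !ln_powR.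
have lnY : ln Y = 2*q/(2-q) * (ln Rad + ln P) + 4*(1-q)/(2-q) * ln lam.
  by rewrite /Y (lnM pY1 pY2) !ln_powR (lnM pR pP).
have q0 : q != 0 by apply/eqP => h; lra.
have q20 : 2 - q != 0 by apply/eqP => h; lra.
have pAA : A * A \in Num.pos by apply: pos; apply: mulr_gt0; rewrite -posrE.
have plK : lam * K \in Num.pos by apply: pos; apply: mulr_gt0; rewrite -posrE.
have pKP : K * P \in Num.pos by apply: pos; apply: mulr_gt0; rewrite -posrE.
have pM : K * P * (K * P) \in Num.pos by apply: pos; apply: mulr_gt0; rewrite -posrE.
split.
  apply: (ln_inj pAA pX).
  rewrite (lnM pA pA) lnX lnA; by field.
split.
  apply: (ln_inj plK pX).
  rewrite (lnM pl pK) lnX lnK' lnA lnD; by field.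
have lnM' : ln (K * P * (K * P)) = (2 - 2/q) * ln X + (2/q - 1) * ln Y.
  rewrite (lnM pKP pKP) (lnM pK pP) lnK' lnA lnD lnX lnY; field; by rewrite q20 q0.
have [hx|hx] := leP (ln (K * P * (K * P))) (ln X).
  rewrite le_max; apply/orP; left; by rewrite -(ler_ln pM pX).
rewrite le_max; apply/orP; right; rewrite -(ler_ln pM pY).
have qi : 1 < 2 / q.  by rewrite ltr_pdivlMr; lra.
have qi2 : 2 / q < 2.  by rewrite ltr_pdivrMr; lra.
move: hx; rewrite lnM'; nra.
Qed.

Section Helpers.
Variable R : realType.
Variable V : normedModType R.

Lemma L1norm_ge0 (phi : nat -> V) p h : inL1 phi p h -> 0 <= L1norm phi p h.
Proof.
case=> th ->; apply: lb_le_inf.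
  by exists (l1_coef p th); exists th.
move=> s [th' [_ ->]]; exact: sumr_ge0.
Qed.

Lemma L1norm_le (phi : nat -> V) p th : L1norm phi p (lin_comb phi p th) <= l1_coef p th.
Proof.
apply: ge_inf; last by exists th.
exists 0 => s [th' [_ ->]]; exact: sumr_ge0.
Qed.

Lemma L1r_0 (phi : nat -> V) r : L1r_const phi r 0 1.
Proof.
split => // p p0.
have e0 : (0 : V) = lin_comb phi p (fun _ => 0).
  by rewrite /lin_comb big1 // => j _; rewrite scale0r.
exists 0; split; first by exists (fun _ => 0).
split.
  apply: (le_trans (y := l1_coef p (fun _ => 0))).
    by rewrite [X in L1norm _ _ X]e0; exact: L1norm_le.
  by rewrite /l1_coef big1 // => j _; rewrite normr0.
by rewrite subrr normr0 mul1r powR_ge0.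
Qed.

Lemma L1rnorm_ge0 (phi : nat -> V) r h : inL1r phi r h -> 0 <= L1rnorm phi r h.
Proof.
move=> [C hC]; apply: lb_le_inf; first by exists C.
by move=> x [x0 _]; exact: ltW.
Qed.
End Helpers.

Theorem lemma5p4 (R : realType) (q : R) (hq1 : 1 < q) (hq2 : q < 2) :
  exists Cq : R, 0 < Cq /\
  forall (V : completeNormedModType R) (ip : V -> V -> R)
         (eps : R) (phi : nat -> V) (r Rad : R) (f : V),
    is_inner_product ip ->
    0 < eps ->
    0 < r -> 0 < Rad ->
    inB phi q r Rad f ->
    forall p : nat, (0 < p)%N ->
      lasso_oracle phi p (lambda eps p) f <=
      Cq * Num.max (Rad `^ q * lambda eps p `^ (2 - q))
                   ((Rad * p%:R `^ (- r)) `^ (2 * q / (2 - q)) *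
                    lambda eps p `^ (4 * (1 - q) / (2 - q))).
Proof.
Proof.
exists 29; split => // V ip eps phi r Rad f _ eps0 r0 R0 hB p p0.
set lam := lambda eps p.
have l0 : 0 < lam.
  rewrite /lam /lambda; apply: mulr_gt0; first exact: mulr_gt0.
  by apply: ltr_wpDl => //; exact: sqrtr_ge0.
set P := p%:R `^ (- r).
have P0 : 0 < P by apply: powR_gt0; rewrite ltr0n.
set D := (lam/Rad)`^(q/2).
set A := Rad * D`^(2*(q^-1-2^-1)).
set K := A / D.
have [cA [cK cM]] := @core R q lam Rad P hq1 hq2 l0 R0 P0 D A K erefl erefl erefl.
have D0 : 0 < D by apply: powR_gt0; exact: divr_gt0.
have A0 : 0 < A by apply: mulr_gt0 => //; exact: powR_gt0.
have K0 : 0 < K by exact: divr_gt0.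
have hB' := hB D D0; rewrite -/A in hB'.
have hinf : has_inf [set x | exists h, inL1r phi r h /\
                 x = `|f - h| + D * L1rnorm phi r h].
  split.
    by exists (`|f - 0| + D * L1rnorm phi r 0); exists 0; split => //; exists 1; exact: L1r_0.
  exists 0 => x [h [hh ->]]; apply: addr_ge0 => //.
  by apply: mulr_ge0; [exact: ltW | exact: L1rnorm_ge0].
have [x [h [hh ->]] hx] := inf_adherent A0 hinf.
set N := L1rnorm phi r h in hx.
have N0 : 0 <= N by exact: L1rnorm_ge0.
have DN0 : 0 <= D * N by apply: mulr_ge0 => //; exact: ltW.
have nfh0 : 0 <= `|f - h| by [].
have hfh : `|f - h| <= 2 * A by lra.
have hN : N <= 2 * K.
  rewrite /K mulrA ler_pdivlMr // (mulrC N); lra.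
have hinfC : has_inf [set C | L1r_const phi r h C].
  split; first by case: hh => C hC; exists C.
  by exists 0 => C [C0 _]; exact: ltW.
have [C hC hCN] := inf_adherent K0 hinfC.
rewrite -/(L1rnorm phi r h) -/N in hCN.
case: hC => C0 /(_ p p0) [gp [igp [ngp dgp]]].
rewrite -/P in dgp.
have hle : lasso_oracle phi p lam f <= `|f - gp| ^+ 2 + lam * L1norm phi p gp.
  apply: ge_inf; last by exists gp.
  exists 0 => y [g [ig ->]]; apply: addr_ge0; first exact: sqr_ge0.
  by apply: mulr_ge0; [exact: ltW | exact: L1norm_ge0].
apply: (le_trans hle).
have L0 : 0 <= L1norm phi p gp by exact: L1norm_ge0.
have hd := ler_distD h f gp.
set u := `|f - gp| in hd *.
have u0 : 0 <= u by rewrite /u normr_ge0.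
set L := L1norm phi p gp in L0 ngp *.
set X := Rad `^ q * lam `^ (2 - q) in cA cK cM *.
set Y := (Rad * P) `^ (2 * q / (2 - q)) * lam `^ (4 * (1 - q) / (2 - q)) in cM *.
set m := Num.max X Y in cM *.
have Xm : X <= m by rewrite /m le_max lexx.
have C3 : C <= 3 * K by lra.
have hu : u <= 2 * A + 3 * K * P.
  apply: (le_trans hd); have : C * P <= 3 * K * P by rewrite ler_pM2r.
  lra.
have KP0 : 0 < K * P by exact: mulr_gt0.
have hu2 : u ^+ 2 <= 8 * (A * A) + 18 * (K * P * (K * P)).
  apply: (le_trans (y := (2 * A + 3 * (K * P)) * (2 * A + 3 * (K * P)))).
    by rewrite expr2; apply: ler_pM => //; rewrite mulrA.
  have := sqr_ge0 (2 * A - 3 * (K * P)); rewrite expr2; nra.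
have hL : lam * L <= 3 * (lam * K).
  by rewrite mulrCA ler_pM2l //; lra.
lra.
Qed.
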